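(* Let $n$ be a positive integer. Define $g:T_n\to D_n$ by $g(A,B,C)=r(A,B,C)$ if $(A,B,C)\in R_n$; $g(A,B,C)=s(A,B,C)$ if $(A,B,C)\in U_n$; $g(A,B,C)=t(A,B,C)$ if $(A,B,C)\in V_n\setminus U_n$; and $g(A,B,C)=t(z(A,B,C))$ if $(A,B,C)\in J_n$. Then $g$ is a bijection from $T_n$ onto $D_n$. (In particular $(2n+1)\binom{2n}{n}=\sum_{i+j+k=n}\binom{2i}{i}\binom{2j}{j}\binom{2k}{k}$, the sum over nonnegative integer triples.)
   Context: A lattice path here is a finite (possibly empty) sequence of steps, each an up step $(1,1)$ or a down step $(1,-1)$, drawn as a polygonal line from a given starting lattice point; its lattice points are its starting point and the endpoints of its steps; the height of a point is its vertical coordinate. Concatenation of paths means drawing them successively, each starting at the endpoint of the preceding one, the first starting at $(0,0)$. $T_n$ is the set of ordered triples $(A,B,C)$ of lattice paths such that for some nonnegative integers $i,j,k$ with $i+j+k=n$, $A$ has $i$ up and $i$ down steps, $B$ has $j$ up and $j$ down steps, and $C$ has $k$ up and $k$ down steps; each of $A,B,C$ is regarded as drawn starting (and hence ending) on the horizontal axis, and heights of points of $C$ refer to this drawing. $D_n$ is the set of pairs $(H,X)$ where $H$ is a lattice path with $n$ up and $n$ down steps drawn from $(0,0)$ to $(2n,0)$ and $X$ is one of the $2n+1$ lattice points of $H$. $R_n$: triples in $T_n$ with $C$ empty. $U_n$: triples with $C$ having a point strictly above the horizontal axis and $B$ either empty or ending with a down step. $V_n$: triples with $C$ having a point strictly below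 the horizontal axis and $B$ either empty or ending with an up step. $I_n=U_n\cap V_n$. $J_n=T_n\setminus(R_n\cup U_n\cup V_n)$. $r:R_n\to D_n$: $r(A,B,\emptyset)=(H,X)$ with $H$ the concatenation of $A$ and $B$ and $X$ the point where $A$ and $B$ meet. $s:U_n\to D_n$: let $K$ be the leftmost point of $C$ of maximal height, cutting $C$ into left part $C_1$ and right part $C_2$; $s(A,B,C)=(H,X)$ with $H$ the concatenation of $C_1,A,B,C_2$ and $X$ the point where $A$ ends and $B$ begins. $t:V_n\to D_n$: same as $s$ but with $K$ the leftmost point of $C$ of minimal height. $z:J_n\to I_n$: $z(A,B,C)=(A,\emptyset,BC)$, where $BC$ is the concatenation of $B$ followed by $C$. *)

(* Defs.v *)
From mathcomp Require Import all_boot all_order all_algebra.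
Set Implicit Arguments. Unset Strict Implicit. Unset Printing Implicit Defensive.
Import Order.TTheory GRing.Theory Num.Theory.

(* A lattice path is a sequence of steps: true = up step (1,1), false = down (1,-1). *)
Definition lpath := seq bool.
Definition triple := (lpath * lpath * lpath)%type.

Definition nups (p : lpath) : nat := count id p.
Definition ndowns (p : lpath) : nat := count negb p.

Definition height (p : lpath) (k : nat) : int :=
  (\sum_(b <- take k p) (if b then 1 else -1))%R.

Definition heights (p : lpath) : seq int := [seq height p k | k <- iota 0 (size p).+1].

Definition above (p : lpath) : bool := has (fun h => 0 < h)%R (heights p).
Definition below (p : lpath) : bool := has (fun h => h < 0)%R (heights p).

Definition ends_down (B : lpath) : bool :=
  if B is [::] then true else ~~ last true B.
Definition ends_up (B : lpath) : bool :=
  if B is [::] then true else last false B.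

Definition inT (n : nat) (x : triple) : bool :=
  let: (A, B, C) := x in
  [&& nups A == ndowns A, nups B == ndowns B, nups C == ndowns C &
      nups A + nups B + nups C == n].

(* D_n : X is represented by its index 0..2n along H *)
Definition inD (n : nat) (y : lpath * nat) : bool :=
  let: (H, X) := y in [&& nups H == n, ndowns H == n & X <= 2 * n].

Definition inR (x : triple) : bool := let: (A, B, C) := x in C == [::].
Definition inU (x : triple) : bool := let: (A, B, C) := x in above C && ends_down B.
Definition inV (x : triple) : bool := let: (A, B, C) := x in below C && ends_up B.

Definition r (x : triple) : lpath * nat :=
  let: (A, B, C) := x in (A ++ B, size A).

Definition maxh (C : lpath) : int := foldr Num.max 0%R (heights C).
Definition minh (C : lpath) : int := foldr Num.min 0%R (heights C).
Definition kmax (C : lpath) : nat := index (maxh C) (heights C).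
Definition kmin (C : lpath) : nat := index (minh C) (heights C).

Definition cut_concat (K : nat) (x : triple) : lpath * nat :=
  let: (A, B, C) := x in
  (take K C ++ A ++ B ++ drop K C, K + size A).

Definition s (x : triple) : lpath * nat := let: (A, B, C) := x in cut_concat (kmax C) x.
Definition t (x : triple) : lpath * nat := let: (A, B, C) := x in cut_concat (kmin C) x.
Definition z (x : triple) : triple := let: (A, B, C) := x in (A, [::], B ++ C).

Definition g (x : triple) : lpath * nat :=
  if inR x then r x
  else if inU x then s x
  else if inV x then t x
  else t (z x).

(* Main.v *)
Require Import Defs.
From mathcomp Require Import all_boot all_order all_algebra zify.
Set Implicit Arguments. Unset Strict Implicit. Unset Printing Implicit Defensive.
Import Order.TTheory GRing.Theory Num.Theory.


Lemma height0 p : height p 0 = 0%R.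
Proof. by rewrite /height take0 big_nil. Qed.

Lemma height_nil k : height [::] k = 0%R.
Proof. by rewrite /height big_nil. Qed.

Lemma height_cons b p k :
  height (b :: p) k.+1 = ((if b then 1 else -1) + height p k)%R.
Proof. by rewrite /height take_cons big_cons. Qed.

Lemma height_over p k : size p <= k -> height p k = height p (size p).
Proof. by move=> h; rewrite /height take_oversize // take_size. Qed.

Lemma height_take p j k : k <= j -> height (take j p) k = height p k.
Proof. by move=> h; rewrite /height take_takel. Qed.

Lemma height_catl p q k : k <= size p -> height (p ++ q) k = height p k.
Proof. by move=> h; rewrite /height takel_cat. Qed.

Lemma height_catr p q k :
  height (p ++ q) (size p + k) = (height p (size p) + height q k)%R.
Proof.
rewrite /height take_cat.
have -> : (size p + k < size p) = false by lia.
by rewrite addKn big_cat take_size.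
Qed.

Lemma hend_cat p q :
  height (p ++ q) (size (p ++ q)) = (height p (size p) + height q (size q))%R.
Proof. by rewrite size_cat height_catr. Qed.

Lemma height_drop p j k :
  height (drop j p) k = (height p (j + k) - height p j)%R.
Proof.
case: (leqP j (size p)) => hj.
  have E := height_catr (take j p) (drop j p) k.
  have E2 := height_catl (drop j p) (leqnn (size (take j p))).
  rewrite cat_take_drop size_takel // in E E2.
  rewrite E E2 height_take //; by rewrite addrC addKr.
rewrite drop_oversize ?(ltnW hj) // height_nil.
rewrite (@height_over p (j + k)); last by lia.
by rewrite (@height_over p j) ?subrr // ltnW.
Qed.

Lemma heightS p k : k < size p ->
  height p k.+1 = (height p k + (if nth true p k then 1 else -1))%R.
Proof. by move=> h; rewrite /height (take_nth true) // -cats1 big_cat big_seq1. Qed.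

Lemma height_step p k :
  (height p k - 1 <= height p k.+1)%R /\ (height p k.+1 <= height p k + 1)%R.
Proof.
case: (ltnP k (size p)) => hk.
  rewrite heightS //; case: (nth true p k); lia.
rewrite !(@height_over p) //; last by apply: leqW.
lia.
Qed.

Lemma hend_eq p : height p (size p) = ((nups p)%:Z - (ndowns p)%:Z)%R.
Proof.
elim: p => [|b p IH]; first by rewrite height_nil.
rewrite /= height_cons IH /nups /ndowns /=; case: b => /=; lia.
Qed.

Lemma balE p : (nups p == ndowns p) = (height p (size p) == 0%R).
Proof. rewrite hend_eq; apply/eqP/eqP; lia. Qed.

Lemma size_ud p : size p = nups p + ndowns p.
Proof. by elim: p => [|[] p IH] //=; rewrite /nups /ndowns /= in IH *; lia. Qed.

Lemma nups_cat p q : nups (p ++ q) = nups p + nups q.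
Proof. by rewrite /nups count_cat. Qed.
Lemma ndowns_cat p q : ndowns (p ++ q) = ndowns p + ndowns q.
Proof. by rewrite /ndowns count_cat. Qed.

Lemma nth_heights p k : k <= size p -> nth 0%R (heights p) k = height p k.
Proof. by move=> h; rewrite /heights (nth_map 0) ?size_iota // nth_iota. Qed.

Lemma mem_heightsP p x :
  reflect (exists2 k, k <= size p & height p k = x) (x \in heights p).
Proof.
apply: (iffP mapP) => [[k]|[k hk <-]].
  by rewrite mem_iota add0n => /andP[_ hk] ->; exists k.
by exists k => //; rewrite mem_iota add0n.
Qed.

Lemma aboveP p :
  reflect (exists2 k, k <= size p & (0 < height p k)%R) (above p).
Proof.
apply: (iffP hasP) => [[x /mem_heightsP [k hk <-]]|[k hk h]].
  by exists k.
by exists (height p k) => //; apply/mem_heightsP; exists k.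
Qed.

Lemma belowP p :
  reflect (exists2 k, k <= size p & (height p k < 0)%R) (below p).
Proof.
apply: (iffP hasP) => [[x /mem_heightsP [k hk <-]]|[k hk h]].
  by exists k.
by exists (height p k) => //; apply/mem_heightsP; exists k.
Qed.

Lemma foldr_max_ge (s : seq int) x : x \in s -> (x <= foldr Num.max 0 s)%R.
Proof.
elim: s => [|a s IH] //=; rewrite in_cons => /orP[/eqP->|/IH h].
  by rewrite le_max lexx.
by rewrite le_max h orbT.
Qed.

Lemma foldr_max_in (s : seq int) : foldr Num.max 0%R s \in 0%R :: s.
Proof.
elim: s => [|a s IH] /=; first by rewrite mem_seq1.
rewrite maxEle; case: ifP => _.
  by move: IH; rewrite !in_cons => /orP[->|->]; rewrite ?orbT.
by rewrite !in_cons eqxx orbT.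
Qed.

Lemma maxh_ge p k : (height p k <= maxh p)%R.
Proof.
case: (leqP k (size p)) => hk.
  by apply: foldr_max_ge; apply/mem_heightsP; exists k.
rewrite height_over ?(ltnW hk) //.
by apply: foldr_max_ge; apply/mem_heightsP; exists (size p).
Qed.

Lemma maxh_mem p : maxh p \in heights p.
Proof.
have := foldr_max_in (heights p); rewrite in_cons => /orP[/eqP E|//].
rewrite /maxh E; apply/mem_heightsP; exists 0 => //; exact: height0.
Qed.

Lemma kmax_spec p : [/\ kmax p <= size p, height p (kmax p) = maxh p &
  forall j, j < kmax p -> height p j != maxh p].
Proof.
have hm := maxh_mem p.
have hk : kmax p <= size p.
  by have := hm; rewrite -index_mem /heights size_map size_iota.
split => //.
  by rewrite -nth_heights // nth_index.
move=> j hj; have := before_find 0%R hj.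
by rewrite nth_heights ?(ltnW (leq_trans hj hk)) //= => ->.
Qed.

Lemma maxh_eq p m k0 : (forall k, height p k <= m)%R -> height p k0 = m ->
  maxh p = m.
Proof.
move=> hle hk; apply/le_anti/andP; split.
  by case: (kmax_spec p) => _ <- _; exact: hle.
by rewrite -hk; exact: maxh_ge.
Qed.

Lemma kmax_eq p K : height p K = maxh p ->
  (forall j, j < K -> height p j != maxh p) -> kmax p = K.
Proof.
move=> hK hj; case: (kmax_spec p) => _ h1 h2.
case: (ltngtP (kmax p) K) => // lt.
  by have := hj _ lt; rewrite h1 eqxx.
by have := h2 _ lt; rewrite hK eqxx.
Qed.

Definition fl (p : lpath) : lpath := map negb p.
Lemma flK : cancel fl fl.
Proof. exact: (mapK negbK). Qed.
Lemma size_fl p : size (fl p) = size p.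
Proof. exact: size_map. Qed.

Lemma height_fl p k : height (fl p) k = (- height p k)%R.
Proof.
rewrite /height /fl -map_take big_map -sumrN.
by apply: eq_bigr => -[]; rewrite /= ?opprK.
Qed.

Lemma heights_fl p : heights (fl p) = map (@GRing.opp int) (heights p).
Proof.
rewrite /heights size_fl -map_comp; apply: eq_map => k /=; exact: height_fl.
Qed.

Lemma foldr_max_opp (s : seq int) :
  foldr Num.max 0%R (map (@GRing.opp int) s) = (- foldr Num.min 0 s)%R.
Proof. by elim: s => [|a s IH] /=; rewrite ?oppr0 // IH oppr_min. Qed.

Lemma maxh_fl p : maxh (fl p) = (- minh p)%R.
Proof. by rewrite /maxh heights_fl foldr_max_opp. Qed.

Lemma kmax_fl p : kmax (fl p) = kmin p.
Proof.
rewrite /kmax /kmin maxh_fl heights_fl index_map //; exact: oppr_inj.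
Qed.

Lemma above_fl p : above (fl p) = below p.
Proof.
rewrite /above /below heights_fl has_map; apply: eq_has => x /=.
exact: oppr_gt0.
Qed.

Lemma below_fl p : below (fl p) = above p.
Proof. by rewrite -{2}(flK p) above_fl. Qed.

Lemma ends_down_fl B : ends_down (fl B) = ends_up B.
Proof. by case: B => //= b B; rewrite (last_map negb) negbK. Qed.

Lemma ends_up_fl B : ends_up (fl B) = ends_down B.
Proof. by rewrite -{2}(flK B) ends_down_fl. Qed.

Lemma nups_fl p : nups (fl p) = ndowns p.
Proof. by rewrite /nups /fl count_map. Qed.
Lemma ndowns_fl p : ndowns (fl p) = nups p.
Proof. by rewrite -{2}(flK p) nups_fl. Qed.

Definition flx (x : triple) : triple :=
  let: (A, B, C) := x in (fl A, fl B, fl C).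

Lemma t_fl x : t x = ((fl (s (flx x)).1), (s (flx x)).2).
Proof.
case: x => [[A B] C].
rewrite /t /s /cut_concat /flx /= kmax_fl /fl !map_cat -map_take -map_drop.
by rewrite !mapK ?size_map //; exact: negbK.
Qed.

Lemma bal0 p : nups p = ndowns p -> height p (size p) = 0%R.
Proof. by move/eqP; rewrite balE => /eqP. Qed.
Lemma bal0' p : height p (size p) = 0%R -> nups p = ndowns p.
Proof. by move/eqP; rewrite -balE => /eqP. Qed.

Lemma height_cut P A W :
  height (P ++ A ++ W) (size P + size A) =
  (height P (size P) + height A (size A))%R.
Proof.
rewrite height_catr; congr (_ + _)%R.
by rewrite -[size A]addn0 height_catr height0 addr0 addn0.
Qed.

Lemma ends_downE B : B != [::] -> ends_down B = ~~ nth true B (size B).-1.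
Proof. by case: B => //= b B _; have := nth_last true (b :: B); rewrite /= => ->. Qed.
Lemma ends_upE B : B != [::] -> ends_up B = nth true B (size B).-1.
Proof. by case: B => //= b B _; have := nth_last true (b :: B); rewrite /= => ->. Qed.

Lemma r_fwd n x : inT n x -> inR x ->
  inD n (r x) /\ height (r x).1 (r x).2 = 0%R.
Proof.
case: x => [[A B] C] /and4P[/eqP hA /eqP hB /eqP hC /eqP hn] /eqP hC0.
subst C; rewrite /= in hn *; split.
  rewrite nups_cat ndowns_cat size_ud /nups /ndowns in hA hB hn *.
  apply/and3P; split; apply/eqP; lia.
by rewrite height_catl // bal0.
Qed.

Lemma r_inj n x y : inT n x -> inR x -> inT n y -> inR y -> r x = r y -> x = y.
Proof.
case: x => [[A B] C] _ /eqP ->; case: y => [[A' B'] C'] _ /eqP -> /=.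
case=> E hs.
have h1 := take_size_cat B hs; have h2 := drop_size_cat B hs.
by rewrite E in h1 h2; rewrite take_size_cat // in h1; rewrite drop_size_cat // in h2; subst.
Qed.

Lemma inD_size n H X : inD n (H, X) -> size H = 2 * n /\ X <= size H.
Proof. by case/and3P => /eqP h1 /eqP h2 h3; rewrite size_ud h1 h2; split; lia. Qed.

Lemma inD_bal n H X : inD n (H, X) -> height H (size H) = 0%R.
Proof. by case/and3P => /eqP h1 /eqP h2 _; apply: bal0; rewrite h1 h2. Qed.

Lemma r_surj n H X : inD n (H, X) -> height H X = 0%R ->
  exists2 x, inT n x && inR x & r x = (H, X).
Proof.
move=> hD h0; have [hs hX] := inD_size hD; have hb := inD_bal hD.
have sT : size (take X H) = X by rewrite size_takel.
have bT : height (take X H) (size (take X H)) = 0%R by rewrite sT height_take.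
have bD : height (drop X H) (size (drop X H)) = 0%R.
  by move: hb; rewrite -{1 2}(cat_take_drop X H) hend_cat bT add0r.
exists (take X H, drop X H, [::]); last by rewrite /= cat_take_drop sT.
rewrite /= andbT; move: hD => /and3P[/eqP h1 _ _].
rewrite !balE bT bD eqxx /=.
by rewrite -h1 -{3}(cat_take_drop X H) nups_cat /nups /= addn0.
Qed.

Lemma s_fwd n x : inT n x -> inU x ->
  inD n (s x) /\ (0 < height (s x).1 (s x).2)%R.
Proof.
case: x => [[A B] C] /and4P[/eqP hA /eqP hB /eqP hC /eqP hn] /andP[ab ed].
rewrite /s /cut_concat /=.
case: (kmax_spec C) => hK hKm _.
have hT := nups_cat (take (kmax C) C) (drop (kmax C) C).
have hT' := ndowns_cat (take (kmax C) C) (drop (kmax C) C).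
rewrite cat_take_drop in hT hT'.
split.
  apply/and3P; split; rewrite ?nups_cat ?ndowns_cat; try apply/eqP.
  - lia.
  - lia.
  - have := size_ud C; have := size_ud A; lia.
have := height_cut (take (kmax C) C) A (B ++ drop (kmax C) C).
rewrite size_takel // => ->.
rewrite height_take // hKm bal0 // addr0.
by case/aboveP: ab => k _ hk; apply: lt_le_trans hk (maxh_ge _ _).
Qed.

Lemma split_uniq1 B D B' D' : B ++ D = B' ++ D' ->
  height B (size B) = 0%R -> height B' (size B') = 0%R -> ends_down B' ->
  (forall k, height D k <= 0)%R -> size B < size B' -> False.
Proof.
move=> E hB hB' ed hD lt.
have ne : B' != [::] by case: B' lt {E hB' ed}.
have p1 : size B' = (size B').-1.+1 by case: (size B') lt.
have := @heightS B' (size B').-1; rewrite -p1 => /(_ (leqnn _)).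
rewrite ends_downE // in ed; rewrite (negbTE ed) hB' => h1.
have eq : size B + ((size B').-1 - size B) = (size B').-1 by lia.
have := height_catl D' (leq_pred (size B')); rewrite -E -{1}eq height_catr hB add0r => h2.
have := hD ((size B').-1 - size B); rewrite h2; lia.
Qed.

Lemma split_uniq B D B' D' : B ++ D = B' ++ D' ->
  height B (size B) = 0%R -> height B' (size B') = 0%R ->
  ends_down B -> ends_down B' ->
  (forall k, height D k <= 0)%R -> (forall k, height D' k <= 0)%R ->
  B = B' /\ D = D'.
Proof.
move=> E hB hB' e e' hD hD'.
have hs : size B = size B'.
  case: (ltngtP (size B) (size B')) => // lt.
    by case: (split_uniq1 E hB hB' e' hD lt).
  by case: (split_uniq1 (esym E) hB' hB e hD' lt).
have := take_size_cat D hs; have := drop_size_cat D hs.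
by rewrite E take_size_cat // drop_size_cat.
Qed.

Lemma cut_facts C A W : kmax C <= size C ->
  let H := take (kmax C) C ++ A ++ W in
  (forall j, j <= kmax C -> height H j = height C j) /\
  (height A (size A) = 0%R -> height H (kmax C + size A) = maxh C).
Proof.
move=> hK H; split.
  by move=> j hj; rewrite /H height_catl ?size_takel // height_take.
move=> hA; have := height_cut (take (kmax C) C) A W.
rewrite size_takel // => ->.
by rewrite height_take // hA addr0; case: (kmax_spec C).
Qed.

Lemma s_inj n x y : inT n x -> inU x -> inT n y -> inU y -> s x = s y -> x = y.
Proof.
case: x => [[A B] C] /and4P[/eqP hA /eqP hB /eqP hC _] /andP[_ ed].
case: y => [[A' B'] C'] /and4P[/eqP hA' /eqP hB' /eqP hC' _] /andP[_ ed'].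
rewrite /s /cut_concat /= => -[E EX].
case: (kmax_spec C) => hK hKm hKb.
case: (kmax_spec C') => hK' hKm' hKb'.
have [f1 f2] := cut_facts A (B ++ drop (kmax C) C) hK.
have [f1' f2'] := cut_facts A' (B' ++ drop (kmax C') C') hK'.
have f2a := f2 (bal0 hA); have f2a' := f2' (bal0 hA').
rewrite E EX f2a' in f2a.
have eK : kmax C = kmax C'.
  case: (ltngtP (kmax C) (kmax C')) => // lt.
    have := hKb' _ lt; rewrite -f1' ?(ltnW lt) // -E f1 // hKm f2a eqxx //.
  have := hKb _ lt; rewrite -f1 ?(ltnW lt) // E f1' // hKm' -f2a eqxx //.
have eT : take (kmax C) C = take (kmax C') C'.
  have := take_size_cat (A ++ B ++ drop (kmax C) C) (size_takel hK).
  by rewrite E eK take_size_cat // size_takel.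
have E2 : A ++ B ++ drop (kmax C) C = A' ++ B' ++ drop (kmax C') C'.
  have := drop_size_cat (A ++ B ++ drop (kmax C) C) (size_takel hK).
  by rewrite E eK drop_size_cat // size_takel.
have sA : size A = size A' by rewrite eK in EX; lia.
have eA : A = A'.
  by have := take_size_cat (B ++ drop (kmax C) C) sA; rewrite E2 take_size_cat.
have E3 : B ++ drop (kmax C) C = B' ++ drop (kmax C') C'.
  by have := drop_size_cat (B ++ drop (kmax C) C) sA; rewrite E2 drop_size_cat.
have hD : forall (C0 : lpath), (forall k, height (drop (kmax C0) C0) k <= 0)%R.
  move=> C0 k; rewrite height_drop; case: (kmax_spec C0) => _ -> _.
  by rewrite subr_le0 maxh_ge.
have [eB eD] := split_uniq E3 (bal0 hB) (bal0 hB') ed ed' (hD C) (hD C').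
by rewrite eA eB -(cat_take_drop (kmax C) C) -(cat_take_drop (kmax C') C') eT eD.
Qed.

Lemma ivt p m K : (0 <= m)%R -> (forall j, j < K -> height p j != m) ->
  forall j, j <= K -> (height p j <= m)%R.
Proof.
move=> hm hne; elim=> [|j IH] hj; first by rewrite height0.
have h1 := IH (ltnW hj); have h2 := hne j hj.
have [_ h3] := height_step p j.
have : (height p j < m)%R by rewrite lt_neqAle h2 h1.
lia.
Qed.

Lemma split_exists W : (height W (size W) <= 0)%R ->
  exists B, exists D, [/\ W = B ++ D, height B (size B) = 0%R, ends_down B &
     forall k, (height D k <= 0)%R].
Proof.
move=> hW.
case: (boolP (above W)) => ab; last first.
  exists [::], W; split => //; first exact: height_nil. move=> k.
  case: (leqP k (size W)) => hk.
    by rewrite leNgt; apply/negP => h; move/aboveP: ab; apply; exists k.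
  by rewrite height_over // ltnW.
pose P k := (k <= size W) && (0 < height W k)%R.
have exP : exists k, P k by case/aboveP: ab => k h1 h2; exists k; apply/andP.
have ubP : forall k, P k -> k <= size W by move=> k /andP[].
case: (ex_maxnP exP ubP) => k0 /andP[hk0 pk0] hmax.
have hnot : forall j, k0 < j -> (height W j <= 0)%R.
  move=> j hj; case: (leqP j (size W)) => hjs.
    rewrite leNgt; apply/negP => h.
    by have := hmax j; rewrite /P hjs h => /(_ isT); lia.
  by rewrite height_over // ltnW.
have lt : k0 < size W.
  rewrite ltn_neqAle hk0 andbT; apply/eqP => e; rewrite e in pk0.
  by have := lt_le_trans pk0 hW; rewrite ltxx.
have h1 := hnot _ (ltnSn k0).
have := heightS lt; case hb: (nth true W k0) => h2.
  by rewrite h2 in h1; lia.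
exists (take k0.+1 W), (drop k0.+1 W); split.
- by rewrite cat_take_drop.
- by rewrite size_takel // height_take //; lia.
- rewrite ends_downE; last by case: W lt {hW ab P exP ubP hmax hnot hk0 pk0 h1 h2 hb}.
  by rewrite size_takel //= nth_take // hb.
- move=> k; rewrite height_drop.
  have := hnot (k0.+1 + k); rewrite h2 => /(_ ltac:(lia)); lia.
Qed.

Lemma s_surj n H X : inD n (H, X) -> (0 < height H X)%R ->
  exists2 x, inT n x && inU x & s x = (H, X).
Proof.
move=> hDn hm; have [hs hX] := inD_size hDn; have hb := inD_bal hDn.
set m := height H X in hm.
pose P k := height H k == m.
have exP : exists k, P k by exists X; rewrite /P.
case: (ex_minnP exP) => K /eqP hK hmin.
have KX : K <= X by apply: hmin; rewrite /P.
have hne : forall j, j < K -> height H j != m.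
  move=> j hj; apply/negP => /eqP e.
  by have := hmin j; rewrite /P e eqxx => /(_ isT); lia.
have hiv := ivt (ltW hm) hne.
have hW : (height (drop X H) (size (drop X H)) <= 0)%R.
  rewrite height_drop size_drop subnKC // hb; rewrite -/m; lia.
have [B [D [WE hB eB hD]]] := split_exists hW.
pose A := take (X - K) (drop K H).
pose C := take K H ++ D.
have sT : size (take K H) = K by rewrite size_takel // (leq_trans KX).
have sA : size A = X - K by rewrite size_takel // size_drop; lia.
have HE : H = take K H ++ A ++ B ++ D.
  have dX : drop X H = drop (X - K) (drop K H) by rewrite drop_drop subnK.
  by rewrite -WE dX /A !cat_take_drop.
have hA : height A (size A) = 0%R.
  rewrite sA height_take // height_drop subnKC // hK; exact: subrr.
have hC : height C (size C) = 0%R.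
  have e := congr1 (fun p => height p (size p)) HE; rewrite /= !hend_cat hA hB hb in e.
  rewrite /C hend_cat; lia.
have hCK : height C K = m.
  by rewrite /C height_catl ?sT // height_take.
have hCle : forall k, (height C k <= m)%R.
  move=> k; case: (leqP k K) => hk.
    by rewrite /C height_catl ?sT // height_take //; apply: hiv.
  have -> : k = size (take K H) + (k - K) by rewrite sT; lia.
  rewrite height_catr sT height_take // hK.
  by have := hD (k - K); lia.
have mC := maxh_eq hCle hCK.
have kC : kmax C = K.
  apply: kmax_eq; first by rewrite mC.
  move=> j hj; rewrite mC /C height_catl ?sT ?(ltnW hj) // height_take ?(ltnW hj) //.
  exact: hne.
exists (A, B, C).
  apply/andP; split; last first.
    apply/andP; split => //; apply/aboveP; exists K; last by rewrite hCK.
    by rewrite /C size_cat sT leq_addr.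
  rewrite /= !balE hA hB hC !eqxx /=.
  case/and3P: hDn => /eqP <- _ _.
  have e := congr1 nups HE; rewrite !nups_cat in e; rewrite /C nups_cat; apply/eqP; lia.
rewrite /s /cut_concat /= kC /C take_size_cat // drop_size_cat // sA.
by rewrite -HE subnKC.
Qed.

Lemma flxK : cancel flx flx.
Proof. by case=> [[A B] C]; rewrite /flx !flK. Qed.

Lemma inT_fl n x : inT n x -> inT n (flx x).
Proof.
case: x => [[A B] C] /and4P[/eqP hA /eqP hB /eqP hC /eqP hn].
by rewrite /flx /inT !nups_fl !ndowns_fl hA hB hC !eqxx /= -hA -hB -hC hn.
Qed.

Lemma inU_fl x : inU (flx x) = inV x.
Proof. by case: x => [[A B] C]; rewrite /inU /inV /flx above_fl ends_down_fl. Qed.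
Lemma inV_fl x : inV (flx x) = inU x.
Proof. by rewrite -{2}(flxK x) inU_fl. Qed.

Lemma inD_fl n H X : inD n (H, X) -> inD n (fl H, X).
Proof. by case/and3P => h1 h2 h3; rewrite /inD nups_fl ndowns_fl h1 h2 h3. Qed.

Lemma t_fwd n x : inT n x -> inV x ->
  inD n (t x) /\ (height (t x).1 (t x).2 < 0)%R.
Proof.
move=> hT hV; rewrite t_fl.
have hU : inU (flx x) by rewrite inU_fl.
have := s_fwd (inT_fl hT) hU.
case: (s (flx x)) => H X /= [h1 h2]; split; first exact: inD_fl.
by rewrite height_fl oppr_lt0.
Qed.

Lemma t_inj n x y : inT n x -> inV x -> inT n y -> inV y -> t x = t y -> x = y.
Proof.
move=> hx vx hy vy; rewrite !t_fl => -[e1 e2].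
have e : s (flx x) = s (flx y).
  by rewrite [s (flx x)]surjective_pairing [s (flx y)]surjective_pairing -e2 -(flK (s (flx x)).1) e1 flK.
have := s_inj (inT_fl hx) _ (inT_fl hy) _ e; rewrite !inU_fl => /(_ vx vy).
by move/(congr1 flx); rewrite !flxK.
Qed.

Lemma t_surj n H X : inD n (H, X) -> (height H X < 0)%R ->
  exists2 x, inT n x && inV x & t x = (H, X).
Proof.
move=> hD hm.
have hm' : (0 < height (fl H) X)%R by rewrite height_fl oppr_gt0.
have [x0 /andP[h1 h2] e] := s_surj (inD_fl hD) hm'.
exists (flx x0).
  by rewrite -inU_fl flxK h2 andbT; apply: inT_fl.
by rewrite t_fl flxK e /= flK.
Qed.

Definition inJ (x : triple) := [&& ~~ inR x, ~~ inU x & ~~ inV x].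

Lemma height1 C : C != [::] -> height C 1 = 1%R \/ height C 1 = (-1)%R.
Proof. by case: C => // -[] C _; rewrite height_cons height0; [left|right]. Qed.

Lemma nonempty_sign C : C != [::] -> above C || below C.
Proof.
move=> ne; have hs : 1 <= size C by case: C ne.
case: (height1 ne) => h.
  by apply/orP; left; apply/aboveP; exists 1 => //; rewrite h.
by apply/orP; right; apply/belowP; exists 1 => //; rewrite h.
Qed.

Lemma last_height B : B != [::] -> height B (size B) = 0%R ->
  height B (size B).-1 = (if nth true B (size B).-1 then -1 else 1)%R.
Proof.
move=> ne h0; have p1 : size B = (size B).-1.+1 by clear h0; case: B ne.
have := @heightS B (size B).-1; rewrite -p1 => /(_ (leqnn _)).
rewrite h0; case: (nth true B (size B).-1); lia.
Qed.

Lemma above_catl B C : above B -> above (B ++ C).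
Proof.
case/aboveP => k hk h; apply/aboveP; exists k; first by rewrite size_cat (leq_trans hk) ?leq_addr.
by rewrite height_catl.
Qed.
Lemma below_catl B C : below B -> below (B ++ C).
Proof.
case/belowP => k hk h; apply/belowP; exists k; first by rewrite size_cat (leq_trans hk) ?leq_addr.
by rewrite height_catl.
Qed.
Lemma above_catr B C : height B (size B) = 0%R -> above C -> above (B ++ C).
Proof.
move=> h0 /aboveP[k hk h]; apply/aboveP; exists (size B + k); first by rewrite size_cat leq_add2l.
by rewrite height_catr h0 add0r.
Qed.
Lemma below_catr B C : height B (size B) = 0%R -> below C -> below (B ++ C).
Proof.
move=> h0 /belowP[k hk h]; apply/belowP; exists (size B + k); first by rewrite size_cat leq_add2l.
by rewrite height_catr h0 add0r.
Qed.

Lemma not_below C : height C (size C) = 0%R -> ~~ below C -> forall k, (0 <= height C k)%R.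
Proof.
move=> h0 nb k; case: (leqP k (size C)) => hk.
  by rewrite leNgt; apply/negP => h; move/belowP: nb; apply; exists k.
by rewrite height_over ?(ltnW hk) // h0.
Qed.
Lemma not_above C : height C (size C) = 0%R -> ~~ above C -> forall k, (height C k <= 0)%R.
Proof.
move=> h0 nb k; case: (leqP k (size C)) => hk.
  by rewrite leNgt; apply/negP => h; move/aboveP: nb; apply; exists k.
by rewrite height_over ?(ltnW hk) // h0.
Qed.

Lemma z_fwd n x : inT n x -> inJ x -> [&& inT n (z x), inU (z x) & inV (z x)].
Proof.
case: x => [[A B] C] /and4P[/eqP hA /eqP hB /eqP hC /eqP hn] /and3P[nR nU nV].
have neC : C != [::] by exact: nR.
have hB0 := bal0 hB.
rewrite /= /inT /inU /inV /= !andbT.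
apply/and3P; split.
- rewrite !balE hend_cat hB0 (bal0 hC) (bal0 hA) !eqxx /= nups_cat.
  by apply/eqP; rewrite /nups /= in hn hA *; lia.
- case/orP: (nonempty_sign neC) => ab; first exact: above_catr hB0 ab.
  have neB : B != [::] by apply/negP => /eqP eB; move: nV; rewrite eB /inV /= ab.
  move: nV; rewrite /inV /= ab /= ends_upE // => nb.
  apply: above_catl; apply/aboveP; exists (size B).-1; first exact: leq_pred.
  by rewrite last_height // (negbTE nb).
- case/orP: (nonempty_sign neC) => ab; last exact: below_catr hB0 ab.
  have neB : B != [::] by apply/negP => /eqP eB; move: nU; rewrite eB /inU /= ab.
  move: nU; rewrite /inU /= ab /= ends_downE // negbK => nb.
  apply: below_catl; apply/belowP; exists (size B).-1; first exact: leq_pred.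
  by rewrite last_height // nb.
Qed.

Definition jc (B C : lpath) :=
  [/\ C != [::], B != [::] &
     forall k, (0 <= (if nth true B (size B).-1 then height C k else - height C k))%R].

Lemma J_jc n A B C : inT n (A, B, C) -> inJ (A, B, C) -> jc B C.
Proof.
case/and4P=> [/eqP hA /eqP hB /eqP hC _] /and3P[nR nU nV].
have neC : C != [::] by exact: nR.
have hC0 := bal0 hC.
case/orP: (nonempty_sign neC) => ab.
  have neB : B != [::] by apply/negP => /eqP eB; move: nU; rewrite eB /inU /= ab.
  move: nU; rewrite /inU /= ab /= ends_downE // negbK => nb.
  move: nV; rewrite /inV /= ends_upE // nb andbT => nb2.
  by split => // k; rewrite nb; apply: not_below.
have neB : B != [::] by apply/negP => /eqP eB; move: nV; rewrite eB /inV /= ab.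
move: nV; rewrite /inV /= ab /= ends_upE // => nb.
move: nU; rewrite /inU /= ends_downE // nb andbT => nb2.
by split => // k; rewrite (negbTE nb) oppr_ge0; apply: not_above.
Qed.

Lemma J_uniq1 B C B' C' : B ++ C = B' ++ C' ->
  height B (size B) = 0%R -> height B' (size B') = 0%R ->
  jc B C -> jc B' C' -> size B < size B' -> False.
Proof.
move=> E hB hB' [neC neB hc] [neC' neB' hc'] lt.
have eq : size B + ((size B').-1 - size B) = (size B').-1 by lia.
have := height_catl C' (leq_pred (size B')); rewrite -E -{1}eq height_catr hB add0r.
rewrite last_height // => h1.
have eq2 : size B' + 1 = size B + (size B' - size B + 1) by lia.
have := height_catr B' C' 1; rewrite -E eq2 height_catr hB add0r hB' add0r => h2.
have := hc ((size B').-1 - size B); have := hc (size B' - size B + 1); have := hc' 1.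
rewrite h1 h2.
case: (height1 neC') => ->; case: (nth true B (size B).-1); case: (nth true B' (size B').-1); lia.
Qed.

Lemma z_inj n x y : inT n x -> inJ x -> inT n y -> inJ y -> z x = z y -> x = y.
Proof.
case: x => [[A B] C] hx jx; case: y => [[A' B'] C'] hy jy /= [eA E].
have j1 := J_jc hx jx; have j2 := J_jc hy jy.
move: hx hy => /and4P[_ /eqP hB _ _] /and4P[_ /eqP hB' _ _].
have hs : size B = size B'.
  case: (ltngtP (size B) (size B')) => // lt.
    by case: (J_uniq1 E (bal0 hB) (bal0 hB') j1 j2 lt).
  by case: (J_uniq1 (esym E) (bal0 hB') (bal0 hB) j2 j1 lt).
have := take_size_cat C hs; have := drop_size_cat C hs.
by rewrite E take_size_cat // drop_size_cat // => -> ->; rewrite eA.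
Qed.

Lemma lastidx p (Q : pred int) : (exists2 k, k <= size p & Q (height p k)) ->
  exists i, [/\ i <= size p, Q (height p i) &
     forall j, i < j -> j <= size p -> ~~ Q (height p j)].
Proof.
move=> ex; pose P k := (k <= size p) && Q (height p k).
have exP : exists k, P k by case: ex => k h1 h2; exists k; apply/andP.
have ubP : forall k, P k -> k <= size p by move=> k /andP[].
case: (ex_maxnP exP ubP) => i /andP[h1 h2] hmax.
exists i; split => // j hj hjs; apply/negP => q.
by have := hmax j; rewrite /P hjs q => /(_ isT); lia.
Qed.

Lemma zsplit C' i i' : height C' (size C') = 0%R -> i < i' -> i' <= size C' ->
  (0 < height C' i')%R -> (height C' i < 0)%R ->
  (forall j, i < j -> j <= size C' -> (0 <= height C' j)%R) ->
  exists B, exists C, [/\ C' = B ++ C, height B (size B) = 0%R,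
    ~~ ends_down B, C != [::] & ~~ below C].
Proof.
move=> h0 lt hi' pos neg after.
have lti : i.+1 < size C'.
  rewrite ltn_neqAle (leq_trans lt hi') andbT; apply/negP => /eqP e.
  suff : i' = size C' by move=> e2; rewrite e2 h0 ltxx in pos.
  lia.
have ltis : i < size C' by lia.
have ha := after i.+1 (ltnSn i) (ltnW lti).
have := heightS ltis; case hb: (nth true C' i) => h2; last by rewrite h2 in ha; lia.
have h1 : height C' i.+1 = 0%R by have [_ h3] := height_step C' i; lia.
exists (take i.+1 C'), (drop i.+1 C'); split.
- by rewrite cat_take_drop.
- by rewrite size_takel ?(ltnW lti) // height_take.
- rewrite ends_downE; last by rewrite -size_eq0 size_takel ?(ltnW lti).
  by rewrite size_takel ?(ltnW lti) //= nth_take // hb.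
  by apply/eqP => e; have := congr1 size e; rewrite size_drop /=; lia.
- apply/negP => /belowP[k hk hlt]; rewrite height_drop h1 subr0 in hlt.
  rewrite size_drop in hk.
  have := after (i.+1 + k); lia.
Qed.

Lemma mk_x n A B C C' : inT n (A, [::], C') -> C' = B ++ C ->
  height B (size B) = 0%R -> C != [::] ->
  (~~ ends_down B && ~~ below C) || (~~ ends_up B && ~~ above C) ->
  exists2 x, inT n x && inJ x & z x = (A, [::], C').
Proof.
move=> /and4P[/eqP hA _ /eqP hC' /eqP hn] E hB neC cnd.
exists (A, B, C); last by rewrite /= E.
have hC : height C (size C) = 0%R.
  by have := bal0 hC'; rewrite E hend_cat hB add0r.
apply/andP; split.
  rewrite /inT !balE hB hC (bal0 hA) !eqxx /=.
  by rewrite E nups_cat /nups /= in hn *; apply/eqP; lia.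
rewrite /inJ /inR /inU /inV neC /=.
by case/orP: cnd => /andP[/negbTE -> /negbTE ->]; rewrite ?andbF ?andFb.
Qed.

Lemma z_surj n y : inT n y -> inU y -> inV y ->
  exists2 x, inT n x && inJ x & z x = y.
Proof.
case: y => [[A B0] C'] hT /andP[ab ed] /andP[bl eu].
have eB : B0 = [::] by case: B0 ed eu {hT} => //= b B; case: (last b B).
subst B0.
have hC0 : height C' (size C') = 0%R by case/and4P: hT => _ _ /eqP h _; apply: bal0.
have [i [hi neg afti]] := lastidx (Q := fun h => (h < 0)%R) (elimTF (belowP C') bl).
have [i' [hi' pos afti']] := lastidx (Q := fun h => (0 < h)%R) (elimTF (aboveP C') ab).
rewrite /= in neg pos afti afti'.
case: (ltngtP i i') => lt.
- have aft : forall j, i < j -> j <= size C' -> (0 <= height C' j)%R.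
    by move=> j h1 h2; rewrite leNgt; apply: afti.
  have [B [C [E hB e1 neC e2]]] := zsplit hC0 lt hi' pos neg aft.
  by apply: (mk_x hT E hB neC); rewrite e1 e2.
- have aft : forall j, i' < j -> j <= size (fl C') -> (0 <= height (fl C') j)%R.
    by move=> j h1 h2; rewrite height_fl oppr_ge0 leNgt; apply: afti'; rewrite // -(size_fl C').
  have h0' : height (fl C') (size (fl C')) = 0%R by rewrite height_fl size_fl hC0 oppr0.
  have pos' : (0 < height (fl C') i)%R by rewrite height_fl oppr_gt0.
  have neg' : (height (fl C') i' < 0)%R by rewrite height_fl oppr_lt0.
  have [B [C [E hB e1 neC e2]]] :=
    zsplit h0' lt (leq_trans hi (eq_leq (esym (size_fl C')))) pos' neg' aft.
  have E' : C' = fl B ++ fl C by rewrite -(flK C') E /fl map_cat.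
  apply: (mk_x hT E' _ _); first by rewrite height_fl size_fl hB oppr0.
    by rewrite -size_eq0 size_fl size_eq0.
  by rewrite ends_up_fl above_fl e1 e2 orbT.
- by subst i'; have := lt_trans pos neg; rewrite ltxx.
Qed.

Lemma notR_U x : inU x -> ~~ inR x.
Proof.
case: x => [[A B] C] /andP[ab _]; rewrite /inR; apply/negP => /eqP e.
by move: ab; rewrite e => /aboveP[k _]; rewrite height_nil ltxx.
Qed.
Lemma notR_V x : inV x -> ~~ inR x.
Proof.
case: x => [[A B] C] /andP[ab _]; rewrite /inR; apply/negP => /eqP e.
by move: ab; rewrite e => /belowP[k _]; rewrite height_nil ltxx.
Qed.

Definition cls (h : int) : nat := if h == 0%R then 0 else if (0 < h)%R then 1 else 2.
Definition sg (x : triple) : nat := if inR x then 0 else if inU x then 1 else 2.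

Lemma g_cls n x : inT n x -> cls (height (g x).1 (g x).2) = sg x /\ inD n (g x).
Proof.
move=> hT; rewrite /g /sg; case: ifP => R.
  by have [h1 h2] := r_fwd hT R; rewrite h2.
case: ifP => U.
  have [h1 h2] := s_fwd hT U; split => //.
  by rewrite /cls h2 (gt_eqF h2).
have V' : inT n (if inV x then x else z x) && inV (if inV x then x else z x).
  case: ifP => V; first by rewrite hT.
  have := @z_fwd n x hT; rewrite /inJ R U V => /(_ isT) /and3P[-> _ ->]; done.
case/andP: V' => T' V''.
have [h1 h2] := t_fwd T' V''; split.
  have -> : (if inV x then t x else t (z x)) = t (if inV x then x else z x) by case: ifP.
  by rewrite /cls (lt_eqF h2) ltNge (ltW h2).
by move: h1; case: ifP.
Qed.

Unset Implicit Arguments.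

Theorem theorem2 (n : nat) (hn : 0 < n) :
  (forall x, inT n x -> inD n (g x)) /\
  {in inT n &, injective g} /\
  (forall y, inD n y -> exists2 x, inT n x & g x = y).
Proof.
split; first by move=> x hx; case: (g_cls hx).
split.
  move=> x y hx0 hy0 e; have hx : inT n x := hx0; have hy : inT n y := hy0.
  have := (g_cls hx).1; have := (g_cls hy).1; rewrite -e => ey ex.
  have : sg x = sg y by rewrite -ex -ey.
  clear ex ey.
  rewrite /sg; case Rx: (inR x); case Ry: (inR y); case Ux: (inU x); case Uy: (inU y) => //= _.
  all: try (by move: e; rewrite /g Rx Ry; exact: (r_inj hx Rx hy Ry)).
  all: try (by move: e; rewrite /g Rx Ry Ux Uy; exact: (s_inj hx Ux hy Uy)).
  move: e; rewrite /g Rx Ry Ux Uy.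
  have pre : forall w, inT n w -> inR w = false -> inU w = false ->
      inT n (if inV w then w else z w) && inV (if inV w then w else z w).
    move=> w hw Rw Uw; case: ifP => V; first by rewrite hw.
    by have := @z_fwd n w hw; rewrite /inJ Rw Uw V => /(_ isT) /and3P[-> _ ->].
  have tz : forall w, (if inV w then t w else t (z w)) = t (if inV w then w else z w).
    by move=> w; case: ifP.
  rewrite !tz => e.
  case/andP: (pre x hx Rx Ux) => h1 h2; case/andP: (pre y hy Ry Uy) => h3 h4.
  have := t_inj h1 h2 h3 h4 e.
  case: ifP => Vx; case: ifP => Vy //.
  - move=> exz; have := @z_fwd n y hy; rewrite /inJ Ry Uy Vy -exz Ux => /(_ isT).
    by case/and3P.
  - move=> exz; have := @z_fwd n x hx; rewrite /inJ Rx Ux Vx exz Uy => /(_ isT).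
    by case/and3P.
  - by move=> ez; apply: (z_inj hx _ hy _ ez); rewrite /inJ ?Rx ?Ux ?Vx ?Ry ?Uy ?Vy.
case=> H X hD.
case: (ltgtP (height H X) 0%R) => hh.
- have [x' /andP[h1 h2] e] := t_surj hD hh.
  case: (boolP (inU x')) => U.
    have [x /andP[hx jx] ez] := z_surj h1 U h2.
    exists x => //; case/and3P: jx => R1 U1 V1.
    by rewrite /g (negbTE R1) (negbTE U1) (negbTE V1) ez.
  by exists x' => //; rewrite /g (negbTE (notR_V h2)) (negbTE U) h2.
- have [x /andP[h1 h2] e] := s_surj hD hh.
  by exists x => //; rewrite /g (negbTE (notR_U h2)) h2.
- have [x /andP[h1 h2] e] := r_surj hD hh.
  by exists x => //; rewrite /g h2.
Qed.
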